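(* If $b$ is a super-core of a length-preserving function $f:\{0,1\}^n\to\{0,1\}^n$ computable by polynomial-size circuits, then $g(x):=f(x)b(x)$ (concatenation, $g:\{0,1\}^n\to\{0,1\}^{n+1}$) is a super-bit.
   Context: A predicate $b$ computable by polynomial-size circuits is a super-core of $f:\{0,1\}^n\to\{0,1\}^{m(n)}$ if there do not exist a nondeterministic polynomial-size circuit family $\mathcal{A}_1$ (accepting iff some witness gives output 1), a co-nondeterministic polynomial-size circuit family $\mathcal{A}_2$ (rejecting iff some witness gives output 0), a polynomial $p$ and infinitely many $n$ such that either $\Pr_{x\in\{0,1\}^n}[\mathcal{A}_1(f(x),1^n)=b(x)=0]+\tfrac12\Pr_{y\in\{0,1\}^{m(n)}}[\mathcal{A}_1(y,1^n)=1]\ge \tfrac12+\tfrac1{p(n)}$ or $\Pr_{x}[\mathcal{A}_2(f(x),1^n)=b(x)=1]+\tfrac12\Pr_{y}[\mathcal{A}_2(y,1^n)=0]\ge \tfrac12+\tfrac1{p(n)}$. A generator $g:\{0,1\}^n\to\{0,1\}^{n+1}$ computable by polynomial-size circuits is a super-bit if for every nondeterministic polynomial-size circuit family $D$, every polynomial $p$ and all sufficiently large $n$, $\Pr[D(U_{n+1})=1]-\Pr[D(g(U_n))=1]<1/p(n)$, where $U_k$ is uniform on $\{0,1\}^k$. *)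

(* Defs.v *)
From mathcomp Require Import all_boot all_order all_algebra.
Set Implicit Arguments. Unset Strict Implicit. Unset Printing Implicit Defensive.
Import Order.TTheory GRing.Theory Num.Theory.
Local Open Scope ring_scope.

Definition peval (cs : seq nat) (n : nat) : nat :=
  \sum_(i < size cs) (nth 0%N cs i * n ^ i)%N.

(* Boolean circuits as straight-line programs.  Wires 0..k-1 are the inputs,
   gate number j defines wire k+j; a reference to a non-existing wire reads 0. *)
Inductive gate : Type :=
| GConst of bool
| GNot of nat
| GAnd of nat & nat
| GOr of nat & nat.

Record circuit : Type := Circuit { gates : seq gate; outs : seq nat }.

Definition eval_gate (ws : seq bool) (g : gate) : bool :=
  match g with
  | GConst c => c
  | GNot i => ~~ nth false ws i
  | GAnd i j => nth false ws i && nth false ws j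
  | GOr i j => nth false ws i || nth false ws j
  end.

Definition eval_wires (gs : seq gate) (inp : seq bool) : seq bool :=
  foldl (fun ws g => rcons ws (eval_gate ws g)) inp gs.

Definition circ_eval (C : circuit) (x : seq bool) : seq bool :=
  [seq nth false (eval_wires (gates C) x) i | i <- outs C].

Definition circ_eval1 (C : circuit) (x : seq bool) : bool :=
  head false (circ_eval C x).

Definition csize (C : circuit) : nat := (size (gates C) + size (outs C))%N.

Definition poly_computable (m : nat -> nat)
    (f : forall n, n.-tuple bool -> (m n).-tuple bool) : Prop :=
  exists (q : seq nat) (C : nat -> circuit), forall n,
    (csize (C n) <= peval q n)%N /\
    forall x : n.-tuple bool, circ_eval (C n) x = val (f n x).

Definition poly_computable_pred (b : forall n, n.-tuple bool -> bool) : Prop :=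
  exists (q : seq nat) (C : nat -> circuit), forall n,
    (csize (C n) <= peval q n)%N /\
    forall x : n.-tuple bool, circ_eval (C n) x = [:: b n x].

(* A (co-)nondeterministic circuit family: for each index n (the 1^n input),
   a circuit reading the input followed by a witness of length wit n. *)
Record nd_family : Type := NDFamily { ndc : nat -> circuit; wit : nat -> nat }.

Definition nd_poly_size (A : nd_family) : Prop :=
  exists q : seq nat, forall n, (csize (ndc A n) + wit A n <= peval q n)%N.

Definition nd_out (A : nd_family) (n : nat) (y : seq bool) : bool :=
  [exists w : (wit A n).-tuple bool, circ_eval1 (ndc A n) (y ++ val w)].

Definition cond_out (A : nd_family) (n : nat) (y : seq bool) : bool :=
  [forall w : (wit A n).-tuple bool, circ_eval1 (ndc A n) (y ++ val w)].

Definition Pr (k : nat) (P : pred (k.-tuple bool)) : rat :=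
  (#|[pred x : k.-tuple bool | P x]|%:R / (2 ^ k)%:R).

Definition is_super_core (m : nat -> nat)
    (f : forall n, n.-tuple bool -> (m n).-tuple bool)
    (b : forall n, n.-tuple bool -> bool) : Prop :=
  poly_computable_pred b /\
  ~ (exists (A1 A2 : nd_family) (p : seq nat),
       nd_poly_size A1 /\ nd_poly_size A2 /\
       forall N : nat, exists n : nat, (N <= n)%N /\ (0 < peval p n)%N /\
         ( Pr (fun x : n.-tuple bool =>
                 (nd_out A1 n (f n x) == false) && (b n x == false))
             + 2^-1 * Pr (fun y : (m n).-tuple bool => nd_out A1 n y)
             >= 2^-1 + (peval p n)%:R^-1
         \/
           Pr (fun x : n.-tuple bool => cond_out A2 n (f n x) && b n x)
             + 2^-1 * Pr (fun y : (m n).-tuple bool => ~~ cond_out A2 n y)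
             >= 2^-1 + (peval p n)%:R^-1)).

Definition is_super_bit (g : forall n, n.-tuple bool -> n.+1.-tuple bool) : Prop :=
  @poly_computable (fun n => n.+1) g /\
  forall D : nd_family, nd_poly_size D ->
  forall p : seq nat, exists N : nat, forall n : nat, (N <= n)%N ->
    (0 < peval p n)%N ->
    Pr (fun y : n.+1.-tuple bool => nd_out D n y)
      - Pr (fun x : n.-tuple bool => nd_out D n (g n x))
      < (peval p n)%:R^-1.

Definition concat_bit (f : forall n, n.-tuple bool -> n.-tuple bool)
    (b : forall n, n.-tuple bool -> bool) : forall n, n.-tuple bool -> n.+1.-tuple bool :=
  fun n x => rcons_tuple (f n x) (b n x).

(* Main.v *)
Require Import Defs.
From mathcomp Require Import all_boot all_order all_algebra.
From mathcomp Require Import zify ring lra.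
From Stdlib Require Import Classical.
Set Implicit Arguments. Unset Strict Implicit. Unset Printing Implicit Defensive.

Lemma peval_nil n : peval [::] n = 0%N.
Proof. by rewrite /peval big_ord0. Qed.

Lemma peval_cons c cs n : peval (c :: cs) n = (c + n * peval cs n)%N.
Proof.
rewrite /peval /= big_ord_recl /= expn0 muln1; congr (_ + _)%N.
rewrite big_distrr /=; apply: eq_bigr => i _; rewrite expnS /=.
by rewrite mulnCA.
Qed.

Fixpoint padd (s t : seq nat) : seq nat :=
  match s, t with
  | [::], _ => t
  | _, [::] => s
  | a :: s', b :: t' => (a + b)%N :: padd s' t'
  end.

Lemma peval_padd s t n : peval (padd s t) n = (peval s n + peval t n)%N.
Proof.
elim: s t => [|a s IH] [|b t] //=; rewrite ?peval_nil ?addn0 //.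
rewrite !peval_cons IH mulnDr; lia.
Qed.

Lemma peval_c k n : peval [:: k] n = k.
Proof. by rewrite peval_cons peval_nil muln0 addn0. Qed.

Lemma eval_wires_cat gs1 gs2 inp :
  eval_wires (gs1 ++ gs2) inp = eval_wires gs2 (eval_wires gs1 inp).
Proof. by rewrite /eval_wires foldl_cat. Qed.

Lemma size_eval_wires gs inp : size (eval_wires gs inp) = (size inp + size gs)%N.
Proof.
elim: gs inp => [|g gs IH] inp /=; first by rewrite addn0.
by rewrite IH size_rcons addSnnS.
Qed.

Lemma eval_wires_ex gs inp : exists r, eval_wires gs inp = inp ++ r.
Proof.
elim: gs inp => [|g gs IH] inp /=; first by exists [::]; rewrite cats0.
have [r ->] := IH (rcons inp (eval_gate inp g)).
by exists (eval_gate inp g :: r); rewrite cat_rcons.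
Qed.

Lemma eval_wires_pre gs inp :
  eval_wires gs inp = inp ++ drop (size inp) (eval_wires gs inp).
Proof. by have [r ->] := eval_wires_ex gs inp; rewrite drop_size_cat. Qed.

Lemma nth_eval_wires gs inp i : (i < size inp)%N ->
  nth false (eval_wires gs inp) i = nth false inp i.
Proof. by move=> Hi; have [r ->] := eval_wires_ex gs inp; rewrite nth_cat Hi. Qed.

Definition sh (n off m i : nat) : nat :=
  if (i < n)%N then i else if (i < n + m)%N then (i + off)%N else (n + off + m)%N.

Definition shg n off m (g : gate) : gate :=
  match g with
  | GConst c => GConst c
  | GNot i => GNot (sh n off m i)
  | GAnd i j => GAnd (sh n off m i) (sh n off m j)
  | GOr i j => GOr (sh n off m i) (sh n off m j)
  end.

Lemma nth_sh n off m x mid r i : size x = n -> size mid = off -> (size r <= m)%N ->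
  nth false (x ++ mid ++ r) (sh n off m i) = nth false (x ++ r) i.
Proof.
move=> Hx Hm Hr; rewrite /sh; case: ifP => H1; first by rewrite !nth_cat Hx H1.
case: ifP => H2.
  rewrite !nth_cat Hx H1 ifF; last by lia.
  rewrite Hm ifF; last by lia.
  congr nth; lia.
rewrite nth_default; last by rewrite !size_cat; lia.
rewrite nth_default //; rewrite size_cat; lia.
Qed.

Lemma eval_shift n off m x mid gs r : size x = n -> size mid = off ->
  (size r + size gs <= m)%N ->
  eval_wires (map (shg n off m) gs) (x ++ mid ++ r)
  = x ++ mid ++ drop n (eval_wires gs (x ++ r)).
Proof.
move=> Hx Hm; elim: gs r => [|g gs IH] r Hr /=.
  by rewrite -Hx drop_size_cat.
have Hr' : (size r <= m)%N by lia.
have Hg : eval_gate (x ++ mid ++ r) (shg n off m g) = eval_gate (x ++ r) g.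
  by clear Hr; case: g => [c|i|i j|i j] /=; rewrite ?nth_sh.
rewrite Hg !rcons_cat IH //.
rewrite size_rcons; move: Hr => /=; lia.
Qed.

Definition comb n (Cf Cb : circuit) : circuit :=
  let sf := size (gates Cf) in let sb := size (gates Cb) in
  Circuit (gates Cf ++ map (shg n sf sb) (gates Cb))
    (map (fun i => if (i < n + sf)%N then i else (n + sf + sb)%N) (outs Cf)
       ++ map (sh n sf sb) (outs Cb)).

Lemma comb_eval n Cf Cb x : size x = n ->
  circ_eval (comb n Cf Cb) x = circ_eval Cf x ++ circ_eval Cb x.
Proof.
move=> Hx; rewrite /circ_eval /comb /= eval_wires_cat map_cat.
set wf := eval_wires (gates Cf) x.
have Hwf : wf = x ++ drop n wf ++ [::] by rewrite cats0 -Hx -eval_wires_pre.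
have Hsm : size (drop n wf) = size (gates Cf).
  by rewrite size_drop size_eval_wires Hx; lia.
have E : eval_wires (map (shg n (size (gates Cf)) (size (gates Cb))) (gates Cb)) wf
   = x ++ drop n wf ++ drop n (eval_wires (gates Cb) (x ++ [::])).
  by rewrite {1}Hwf eval_shift.
rewrite E.
rewrite cats0 -!map_comp; set wb := eval_wires (gates Cb) x.
have Hsr : size (drop n wb) = size (gates Cb).
  by rewrite size_drop size_eval_wires Hx; lia.
congr (_ ++ _); apply: eq_map => i /=.
  rewrite {2}Hwf cats0 catA; case: ifP => Hi.
    by rewrite nth_cat size_cat Hx Hsm Hi.
  rewrite !nth_default // ?size_cat; lia.
rewrite nth_sh ?Hsr //.
by rewrite {2}/wb (eval_wires_pre (gates Cb) x) Hx.
Qed.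

Section ND.
Variable D : nd_family.

Definition LL n := (n.+1 + wit D n)%N.
Definition WW n := (LL n + size (gates (ndc D n)))%N.
Definition oD n := match outs (ndc D n) with
  | o :: _ => if (o < WW n)%N then o else (WW n).+1
  | [::] => (WW n).+1 end.

Definition A1 := NDFamily (fun n => Circuit (gates (ndc D n) ++ [:: GNot n; GAnd (oD n) (WW n)]) [:: (WW n).+1])
   (fun n => (wit D n).+1).
Definition A2 := NDFamily (fun n => Circuit (gates (ndc D n) ++ [:: GNot (oD n); GNot n; GOr (WW n) (WW n).+1]) [:: (WW n).+2])
   (fun n => (wit D n).+1).

Lemma oD_neq n : oD n != WW n.
Proof. rewrite /oD; case: (outs _) => [|o _]; first lia. case: ifP; lia. Qed.

Lemma Dout n inp : size inp = LL n ->
  circ_eval1 (ndc D n) inp = nth false (eval_wires (gates (ndc D n)) inp) (oD n).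
Proof.
move=> Hs; rewrite /circ_eval1 /circ_eval /oD.
have Hw : size (eval_wires (gates (ndc D n)) inp) = WW n by rewrite size_eval_wires Hs.
case: (outs _) => [|o os] /=; first by rewrite nth_default // Hw.
case: ifP => // Ho; rewrite !nth_default // Hw; lia.
Qed.

Lemma nth_inp n (y w : seq bool) c : size y = n ->
  nth false (rcons y c ++ w) n = c.
Proof. by move=> Hy; rewrite nth_cat size_rcons Hy ltnSn nth_rcons Hy ltnn eqxx. Qed.

Lemma A1_eval n (y w : seq bool) c : size y = n -> size w = wit D n ->
  circ_eval1 (ndc A1 n) (y ++ c :: w) = ~~ c && circ_eval1 (ndc D n) (rcons y c ++ w).
Proof.
move=> Hy Hw; rewrite -cat_rcons.
set inp := rcons y c ++ w.
have Hs : size inp = LL n by rewrite size_cat size_rcons Hy Hw.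
rewrite Dout // /circ_eval1 /circ_eval /= eval_wires_cat /=.
set ws := eval_wires _ inp.
have Hws : size ws = WW n by rewrite size_eval_wires Hs.
have Hn : nth false ws n = c.
  rewrite nth_eval_wires ?Hs; last by rewrite /LL; lia.
  exact: nth_inp.
rewrite !nth_rcons !size_rcons Hws !ltnn !eqxx (negbTE (oD_neq n)) Hn.
case: ifP => H; first by rewrite andbC.
by rewrite nth_default ?andbF // Hws leqNgt H.
Qed.

Lemma A2_eval n (y w : seq bool) c : size y = n -> size w = wit D n ->
  circ_eval1 (ndc A2 n) (y ++ c :: w) = ~~ circ_eval1 (ndc D n) (rcons y c ++ w) || ~~ c.
Proof.
move=> Hy Hw; rewrite -cat_rcons.
set inp := rcons y c ++ w.
have Hs : size inp = LL n by rewrite size_cat size_rcons Hy Hw.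
rewrite Dout // /circ_eval1 /circ_eval /= eval_wires_cat /=.
set ws := eval_wires _ inp.
have Hws : size ws = WW n by rewrite size_eval_wires Hs.
have Hn : nth false ws n = c.
  rewrite nth_eval_wires ?Hs; last by rewrite /LL; lia.
  exact: nth_inp.
have Hnw : (n < WW n)%N by rewrite /WW /LL; lia.
by rewrite !nth_rcons !size_rcons Hws !ltnn !eqxx Hnw Hn ltnSn.
Qed.

Lemma nd_out_A1 n (y : n.-tuple bool) : nd_out A1 n y = nd_out D n (rcons y false).
Proof.
rewrite /nd_out; apply/existsP/existsP => [[w]|[w]].
  case/tupleP: w => c w; rewrite /= A1_eval ?size_tuple //.
  by case/andP => /negbTE Hc H; exists w; rewrite -Hc.
exists [tuple of false :: w]; by rewrite /= A1_eval ?size_tuple.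
Qed.

Lemma cond_out_A2 n (y : n.-tuple bool) : cond_out A2 n y = ~~ nd_out D n (rcons y true).
Proof.
rewrite /cond_out /nd_out negb_exists; apply/forallP/forallP => H w.
  by have := H [tuple of true :: w]; rewrite /= A2_eval ?size_tuple // orbF.
case/tupleP: w => c w; rewrite /= A2_eval ?size_tuple //.
by case: c; rewrite ?orbT // orbF; apply: H.
Qed.

Lemma size_A1 q : (forall n, (csize (ndc D n) + wit D n <= peval q n)%N) ->
  nd_poly_size A1.
Proof.
move=> H; exists (padd [:: 4%N] q) => n; rewrite peval_padd peval_c.
have := H n; rewrite /csize /= size_cat /=; lia.
Qed.

Lemma size_A2 q : (forall n, (csize (ndc D n) + wit D n <= peval q n)%N) ->
  nd_poly_size A2.
Proof.
move=> H; exists (padd [:: 5%N] q) => n; rewrite peval_padd peval_c.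
have := H n; rewrite /csize /= size_cat /=; lia.
Qed.

End ND.

Import Order.TTheory GRing.Theory Num.Theory.
Section Count.
Import Order.TTheory GRing.Theory Num.Theory.
Local Open Scope ring_scope.

Lemma card_sum (T : finType) (P : pred T) : #|[pred x | P x]| = (\sum_(x : T) P x)%N.
Proof. rewrite -sum1_card big_mkcond /=; apply: eq_bigr => x _; by rewrite inE; case: (P x). Qed.

Lemma Pr_ext k (P Q : pred (k.-tuple bool)) : (forall x, P x = Q x) -> Pr P = Pr Q.
Proof. move=> H; rewrite /Pr; congr (_%:R / _); apply: eq_card => x; by rewrite !inE H. Qed.

Lemma card_split n (P : pred (n.+1.-tuple bool)) :
 #|[pred z | P z]| = (#|[pred y : n.-tuple bool | P (rcons_tuple y false)]|
     + #|[pred y : n.-tuple bool | P (rcons_tuple y true)]|)%N.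
Proof.
rewrite !card_sum.
pose h := fun p : bool * n.-tuple bool => rcons_tuple p.2 p.1.
have hinj : injective h.
  move=> [c y] [c' y'] /(congr1 val) /= /rcons_inj [/val_inj -> ->] //.
have hb : bijective h.
  by apply: inj_card_bij => //; rewrite card_prod !card_tuple card_bool expnS.
rewrite (reindex h) /=; last exact: onW_bij.
have -> : (\sum_(p : bool * n.-tuple bool) P (h p) =
    \sum_(c : bool) \sum_(y : n.-tuple bool) P (h (c,y)))%N.
  by rewrite pair_big /=; apply: eq_bigr => -[c y].
by rewrite big_bool /= addnC.
Qed.

Lemma count3 n (c1 c2 e : pred (n.-tuple bool)) : (forall x, c1 x + c2 x + e x = 1)%N ->
  (#|[pred x|c1 x]| + #|[pred x|c2 x]| + #|[pred x|e x]| = 2^n)%N.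
Proof.
move=> H; rewrite !card_sum -!big_split /=.
rewrite (eq_bigr (fun _ => 1%N)); last by move=> x _; apply: H.
transitivity #|{: n.-tuple bool}|; first exact: sum1_card.
by rewrite card_tuple card_bool.
Qed.

End Count.

Theorem proposition6p2
  (f : forall n : nat, n.-tuple bool -> n.-tuple bool)
  (b : forall n : nat, n.-tuple bool -> bool) :
  @poly_computable (fun n => n) f ->
  @is_super_core (fun n => n) f b ->
  is_super_bit (concat_bit f b).
Proof.
move=> [qf [Cf HCf]] [[qb [Cb HCb]] Hcore].
split.
  exists (padd qf qb), (fun n => comb n (Cf n) (Cb n)) => n.
  have [Hf1 Hf2] := HCf n; have [Hb1 Hb2] := HCb n.
  split.
    rewrite peval_padd /csize /comb /= !size_cat !size_map.
    move: Hf1 Hb1; rewrite /csize; lia.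
  by move=> x; rewrite comb_eval ?size_tuple // Hf2 Hb2 /= cats1.
move=> D [qD HqD] p.
apply: NNPP => Hn.
apply: Hcore.
exists (A1 D), (A2 D), (padd p p).
split; first exact: (size_A1 HqD).
split; first exact: (size_A2 HqD).
move=> N.
have [n [HNn [Hp Hd]]] : exists n, (N <= n)%N /\ (0 < peval p n)%N /\
   ((peval p n)%:R^-1 <= Pr (fun y : n.+1.-tuple bool => nd_out D n y)
      - Pr (fun x : n.-tuple bool => nd_out D n (concat_bit f b x)))%R.
  apply: NNPP => H; apply: Hn; exists N => n HNn Hp.
  rewrite ltNge; apply/negP => Hd; apply: H; exists n; split => //.
exists n; split => //; rewrite peval_padd; split; first lia.
set P := peval p n.
pose c1 := #|[pred x : n.-tuple bool | ~~ nd_out D n (rcons (f n x) false) && ~~ b n x]|.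
pose c2 := #|[pred x : n.-tuple bool | ~~ nd_out D n (rcons (f n x) true) && b n x]|.
pose c3 := #|[pred x : n.-tuple bool | nd_out D n (rcons (f n x) (b n x))]|.
pose d0 := #|[pred y : n.-tuple bool | nd_out D n (rcons y false)]|.
pose d1 := #|[pred y : n.-tuple bool | nd_out D n (rcons y true)]|.
have E1 : Pr (fun x : n.-tuple bool => (nd_out (A1 D) n (f n x) == false) && (b n x == false))
   = (c1%:R / (2^n)%:R)%R.
  by rewrite (@Pr_ext _ _ (fun x : n.-tuple bool => ~~ nd_out D n (rcons (f n x) false) && ~~ b n x)) // => x; rewrite nd_out_A1 !eqbF_neg.
have E2 : Pr (fun y : n.-tuple bool => nd_out (A1 D) n y) = (d0%:R / (2^n)%:R)%R.
  by rewrite (@Pr_ext _ _ (fun y : n.-tuple bool => nd_out D n (rcons y false))) // => x; rewrite nd_out_A1.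
have E3 : Pr (fun x : n.-tuple bool => cond_out (A2 D) n (f n x) && b n x)
   = (c2%:R / (2^n)%:R)%R.
  by rewrite (@Pr_ext _ _ (fun x : n.-tuple bool => ~~ nd_out D n (rcons (f n x) true) && b n x)) // => x; rewrite cond_out_A2.
have E4 : Pr (fun y : n.-tuple bool => ~~ cond_out (A2 D) n y) = (d1%:R / (2^n)%:R)%R.
  by rewrite (@Pr_ext _ _ (fun y : n.-tuple bool => nd_out D n (rcons y true))) // => x; rewrite cond_out_A2 negbK.
have E5 : Pr (fun x : n.-tuple bool => nd_out D n (concat_bit f b x)) = (c3%:R / (2^n)%:R)%R.
  by [].
have E6 : Pr (fun y : n.+1.-tuple bool => nd_out D n y) = ((d0 + d1)%:R / (2^n.+1)%:R)%R.
  by rewrite /Pr card_split.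
have E7 : (c1 + c2 + c3 = 2^n)%N.
  apply: count3 => x; case: (b n x);
  case: (nd_out D n (rcons (f n x) true)); case: (nd_out D n (rcons (f n x) false)) => //.
rewrite E1 E2 E3 E4; rewrite E5 E6 in Hd.
have HN : (0 < (2^n)%:R :> rat)%R by rewrite ltr0n expn_gt0.
have HP : (0 < P%:R :> rat)%R by rewrite ltr0n.
have HN0 : ((2^n)%:R != 0 :> rat)%R by rewrite gt_eqF.
have HP0 : (P%:R != 0 :> rat)%R by rewrite gt_eqF.
have E8 : (c1%:R / (2^n)%:R = 1 - c2%:R / (2^n)%:R - c3%:R / (2^n)%:R :> rat)%R.
  have -> : (c1%:R = (2^n)%:R - c2%:R - c3%:R :> rat)%R by rewrite -E7 !natrD; ring.
  by field.
have E9 : ((d0 + d1)%:R / (2^n.+1)%:R = (d0%:R / (2^n)%:R + d1%:R / (2^n)%:R) / 2 :> rat)%R.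
  by rewrite natrD expnS natrM; field.
have E10 : ((P + P)%:R^-1 = P%:R^-1 / 2 :> rat)%R.
  by rewrite natrD; field; rewrite HP0 /= gt_eqF // addr_gt0.
rewrite E8 E10; rewrite E9 in Hd.
move: Hd; set u2 := (c2%:R / _)%R; set u3 := (c3%:R / _)%R; set v0 := (d0%:R / _)%R;
  set v1 := (d1%:R / _)%R; set e := (P%:R^-1)%R => Hd.
case: (lerP (2^-1 + e / 2) (1 - u2 - u3 + 2^-1 * v0))%R => H; [left | right]; lra.
Qed.
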